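(* Let $\alpha\in[0,2]$ and consider $\mathcal{B}_\alpha(6,3)$. Let $S_a=\{(2,2,2)',(3,3,0)',(3,0,3)',(0,3,3)',(4,1,1)',(1,4,1)',(1,1,4)'\}$ and $S_b=\{(4,2,0)',(4,0,2)',(2,4,0)',(2,0,4)',(0,4,2)',(0,2,4)'\}$, and let $\sigma$ be the mixed strategy with $\sigma(s)=1/10$ for $s\in S_a$, $\sigma(s)=1/20$ for $s\in S_b$, and $\sigma(s)=0$ otherwise. Then $\sigma$ induces uniform marginals (each battlefield's bid is uniform on $\{0,1,2,3,4\}$) and $\sigma$ is a symmetric equilibrium strategy of $\mathcal{B}_\alpha(6,3)$.
   Context: Fix integers $N\ge1$, $K\ge2$ and a real number $\alpha$. The Colonel Blotto game $\mathcal{B}_\alpha(N,K)$ is the two-player simultaneous-move game with players $A,B$, each with pure strategy set $S=\{s\in\{0,1,\ldots,N\}^K:\sum_{k=1}^K s_k=N\}$, in which the payoff of player $i$ at the pure profile $(s^i,s^{-i})$ is $\pi^i(s^i,s^{-i})=\sum_{k=1}^K\big(\mathbf 1[s^i_k>s^{-i}_k]+\tfrac{\alpha}{2}\mathbf 1[s^i_k=s^{-i}_k]\big)$. Mixed strategies are probability distributions on $S$, with expected payoffs under independent randomization. A symmetric equilibrium strategy is a mixed strategy $\sigma$ such that $(\sigma,\sigma)$ is a Nash equilibrium. When $K$ divides $N$ and $m=N/K$, $\sigma$ induces uniform marginals if for every battlefield $k$ the distribution of $s_k$ under $s\sim\sigma$ is uniform on $\{0,1,\ldots,2m\}$. *)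

(* Defs.v *)
From HB Require Import structures.
From mathcomp Require Import all_boot all_order all_algebra.
From mathcomp Require Import reals.
Set Implicit Arguments. Unset Strict Implicit. Unset Printing Implicit Defensive.
Import Order.TTheory GRing.Theory Num.Theory.
Local Open Scope ring_scope.

Definition bidvec (N K : nat) := {ffun 'I_K -> 'I_N.+1}.

Definition is_pure (N K : nat) (s : bidvec N K) : bool :=
  (\sum_(k < K) (s k : nat) == N)%N.

Definition blotto_payoff (R : realType) (alpha : R) (N K : nat)
  (s t : bidvec N K) : R :=
  \sum_(k < K) ((((s k : nat) > t k)%N)%:R
                 + alpha / 2%:R * (((s k : nat) == t k))%:R).

(* Mixed strategy: a probability distribution on the pure strategy set S
   (represented on bidvec, with zero mass outside S). *)
Definition is_mixed (R : realType) (N K : nat) (sigma : {ffun bidvec N K -> R})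
  : Prop :=
  (forall s, 0 <= sigma s) /\ (forall s, ~~ is_pure s -> sigma s = 0) /\
  \sum_(s : bidvec N K) sigma s = 1.

Definition exp_payoff (R : realType) (alpha : R) (N K : nat)
  (tau sigma : {ffun bidvec N K -> R}) : R :=
  \sum_(s : bidvec N K) \sum_(t : bidvec N K)
     tau s * sigma t * blotto_payoff alpha s t.

Definition is_nash (R : realType) (alpha : R) (N K : nat)
  (tauA tauB : {ffun bidvec N K -> R}) : Prop :=
  is_mixed tauA /\ is_mixed tauB /\
  (forall rho, is_mixed rho ->
     exp_payoff alpha rho tauB <= exp_payoff alpha tauA tauB) /\
  (forall rho, is_mixed rho ->
     exp_payoff alpha rho tauA <= exp_payoff alpha tauB tauA).

Definition symmetric_equilibrium (R : realType) (alpha : R) (N K : nat)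
  (sigma : {ffun bidvec N K -> R}) : Prop := is_nash alpha sigma sigma.

Definition uniform_marginals (R : realType) (N K : nat)
  (sigma : {ffun bidvec N K -> R}) : Prop :=
  let m := (N %/ K)%N in
  forall (k : 'I_K) (j : 'I_N.+1),
    \sum_(s : bidvec N K | s k == j) sigma s =
      if (j <= 2 * m)%N then (2 * m).+1%:R^-1 else 0.

Definition bv3 (a b c : nat) : seq nat := [:: a; b; c].
Definition S_a : seq (seq nat) :=
  [:: bv3 2 2 2; bv3 3 3 0; bv3 3 0 3; bv3 0 3 3; bv3 4 1 1; bv3 1 4 1;
      bv3 1 1 4].
Definition S_b : seq (seq nat) :=
  [:: bv3 4 2 0; bv3 4 0 2; bv3 2 4 0; bv3 2 0 4; bv3 0 4 2; bv3 0 2 4].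
Definition as_list (s : bidvec 6 3) : seq nat := [seq (s k : nat) | k <- enum 'I_3].

Definition sigma63 (R : realType) : {ffun bidvec 6 3 -> R} :=
  [ffun s => if as_list s \in S_a then 10%:R^-1
             else if as_list s \in S_b then 20%:R^-1 else 0].

(* Main.v *)
Require Import Defs.
From HB Require Import structures.
From mathcomp Require Import all_boot all_order all_algebra.
From mathcomp Require Import reals.
From mathcomp Require Import ring lra.
Import Order.TTheory GRing.Theory Num.Theory.
Local Open Scope ring_scope.

Definition sum7 (G : nat -> nat) := foldr (fun a acc => (G a + acc)%N) 0%N (iota 0 7).
Definition sum3 (G : nat -> nat -> nat -> nat) :=
  sum7 (fun a => sum7 (fun b => sum7 (fun c => G a b c))).
Definition all7 (P : nat -> bool) := all P (iota 0 7).
Definition ccn (a b c : nat) : nat :=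
  if [:: a;b;c] \in S_a then 2 else if [:: a;b;c] \in S_b then 1 else 0.
Definition An x y z := sum3 (fun a b c => ccn a b c * ((a<x) + (b<y) + (c<z)))%N.
Definition Bn x y z := sum3 (fun a b c => ccn a b c * ((x==a) + (y==b) + (z==c)))%N.
Lemma check1 : all7 (fun x => all7 (fun y => all7 (fun z => (x+y+z==6) ==>
  [&& An x y z <= 24, Bn x y z <= 12 &
      (ccn x y z != 0) ==> (An x y z == 24) && (Bn x y z == 12)])))%N.
Proof. vm_compute. reflexivity. Qed.
Lemma check2 : all7 (fun x => all7 (fun y => all7 (fun z =>
  (ccn x y z != 0) ==> (x+y+z==6))))%N.
Proof. vm_compute. reflexivity. Qed.
Lemma check3 : sum3 ccn = 20%N.
Proof. vm_compute. reflexivity. Qed.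
Lemma check4 : (all (fun k => all7 (fun j =>
  sum3 (fun a b c => (nth 0 [:: a;b;c] k == j) * ccn a b c) ==
  if j <= 4 then 4 else 0)) (iota 0 3))%N.
Proof. vm_compute. reflexivity. Qed.

Lemma all7P P x : all7 P -> (x < 7)%N -> P x.
Proof. by move=> /allP H Hx; apply: H; rewrite mem_iota. Qed.
Arguments all7P {P x}.

Notation T := (bidvec 6 3).
Definition i0 : 'I_3 := @Ordinal 3 0 isT.
Definition i1 : 'I_3 := @Ordinal 3 1 isT.
Definition i2 : 'I_3 := @Ordinal 3 2 isT.

Lemma sum3ord (f : 'I_3 -> nat) : (\sum_k f k = f i0 + f i1 + f i2)%N.
Proof.
rewrite !big_ord_recr big_ord0 /= add0n.
by congr (f _ + f _ + f _)%N; apply: val_inj.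
Qed.

Lemma ord3P (P : 'I_3 -> Prop) : P i0 -> P i1 -> P i2 -> forall k, P k.
Proof.
move=> H0 H1 H2 [[|[|[|m]]] Hm].
- by have -> : Ordinal Hm = i0 by apply: val_inj.
- by have -> : Ordinal Hm = i1 by apply: val_inj.
- by have -> : Ordinal Hm = i2 by apply: val_inj.
- by [].
Qed.

Definition mk (p : 'I_7 * ('I_7 * 'I_7)) : T := [ffun k => tnth [tuple p.1; p.2.1; p.2.2] k].
Definition unmk (s : T) : 'I_7 * ('I_7 * 'I_7) := (s i0, (s i1, s i2)).

Lemma mk0 p : mk p i0 = p.1. Proof. by rewrite ffunE. Qed.
Lemma mk1 p : mk p i1 = p.2.1. Proof. by rewrite ffunE. Qed.
Lemma mk2 p : mk p i2 = p.2.2. Proof. by rewrite ffunE. Qed.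

Lemma sumT (F : T -> nat) :
  (\sum_(t : T) F t = \sum_(a < 7) \sum_(b < 7) \sum_(c < 7) F (mk (a, (b, c))))%N.
Proof.
rewrite (reindex mk) /=.
  under [RHS]eq_bigr do rewrite pair_big.
  by rewrite pair_big.
exists unmk => [[a [b c]] _|s _].
  by rewrite /unmk mk0 mk1 mk2.
apply/ffunP; apply: ord3P; by rewrite ?mk0 ?mk1 ?mk2.
Qed.

Lemma sum7E (G : nat -> nat) : (\sum_(a < 7) G a = sum7 G)%N.
Proof. by rewrite -(big_mkord xpredT G) unlock. Qed.

Lemma sumTE (F : T -> nat) (G : nat -> nat -> nat -> nat) :
  (forall a b c : 'I_7, F (mk (a, (b, c))) = G a b c) ->
  (\sum_(t : T) F t = sum3 G)%N.
Proof.
move=> H; rewrite sumT /sum3 -sum7E; apply: eq_bigr => a _.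
rewrite -sum7E; apply: eq_bigr => b _.
rewrite -sum7E; apply: eq_bigr => c _.
exact: H.
Qed.

Definition cc (t : T) := ccn (t i0) (t i1) (t i2).

Lemma as_listE (s : T) : as_list s = [:: (s i0 : nat); (s i1 : nat); (s i2 : nat)].
Proof.
rewrite /as_list !enum_ordSl enum_ord0 /=.
by congr [:: val (s _); val (s _); val (s _)]; apply: val_inj.
Qed.

Lemma sigmaE (R : realType) (t : T) : sigma63 R t = (cc t)%:R / 20%:R.
Proof.
rewrite /sigma63 ffunE as_listE /cc /ccn.
case: ifP => _; first by field.
case: ifP => _; first by field.
by rewrite mul0r.
Qed.

Lemma pureE (s : T) : is_pure s = ((s i0 : nat) + s i1 + s i2 == 6)%N.
Proof. by rewrite /is_pure sum3ord. Qed.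

Definition Wt (s t : T) := ((t i0 < s i0) + (t i1 < s i1) + (t i2 < s i2))%N.
Definition Tt (s t : T) := ((s i0 == t i0) + (s i1 == t i1) + (s i2 == t i2))%N.

Section Main.
Variables (R : realType) (alpha : R).

Lemma payoffE s t :
  blotto_payoff alpha s t = (Wt s t)%:R + alpha / 2%:R * (Tt s t)%:R.
Proof. by rewrite /blotto_payoff big_split /= -mulr_sumr -!natr_sum !sum3ord. Qed.

Definition V (s : T) := \sum_(t : T) sigma63 R t * blotto_payoff alpha s t.

Lemma VE s : V s = (An (s i0) (s i1) (s i2))%:R / 20%:R
   + alpha / 2%:R * ((Bn (s i0) (s i1) (s i2))%:R / 20%:R).
Proof.
rewrite /V.
transitivity (\sum_(t : T) ((cc t * Wt s t)%N%:R / 20%:R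
    + alpha / 2%:R * ((cc t * Tt s t)%N%:R / 20%:R))).
  by apply: eq_bigr => t _; rewrite sigmaE payoffE !natrM; ring.
rewrite big_split /= -mulr_sumr -!mulr_suml -!natr_sum.
rewrite /An /Bn.
rewrite (@sumTE _ (fun a b c => ccn a b c * ((a < s i0) + (b < s i1) + (c < s i2)))%N); last first.
  by move=> a b c; rewrite /cc /Wt !mk0 !mk1 !mk2.
rewrite (@sumTE _ (fun a b c => ccn a b c * ((nat_of_ord (s i0) == a) + (nat_of_ord (s i1) == b) + (nat_of_ord (s i2) == c)))%N) //.
by move=> a b c; rewrite /cc /Tt !mk0 !mk1 !mk2.
Qed.

Definition cst : R := 24%:R / 20%:R + alpha / 2%:R * (12%:R / 20%:R).

Lemma Vbound s : 0 <= alpha -> is_pure s ->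
  V s <= cst /\ (cc s != 0%N -> V s = cst).
Proof.
move=> ha; rewrite pureE => hp.
have := all7P (all7P (all7P check1 (ltn_ord (s i0))) (ltn_ord (s i1))) (ltn_ord (s i2)).
rewrite hp /= => /and3P [hA hB hE].
rewrite VE /cst; split.
  rewrite -(ler_nat R) in hA; rewrite -(ler_nat R) in hB.
  have h2 : (0:R) <= alpha / 2%:R by apply: divr_ge0.
  have h20 : (0:R) <= 20%:R^-1 by rewrite invr_ge0 ler0n.
  apply: lerD; first exact: ler_wpM2r.
  by apply: ler_wpM2l => //; apply: ler_wpM2r.
by move=> /(implyP hE) /andP [/eqP -> /eqP ->].
Qed.

Lemma cc_pure s : cc s != 0%N -> is_pure s.
Proof.
move=> h; rewrite pureE.
have := all7P (all7P (all7P check2 (ltn_ord (s i0))) (ltn_ord (s i1))) (ltn_ord (s i2)).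
by move/implyP; apply.
Qed.

Lemma sigma_mixed : is_mixed (sigma63 R).
Proof.
split; first by move=> s; rewrite sigmaE divr_ge0 ?ler0n.
split.
  move=> s hs; rewrite sigmaE; case E: (cc s == 0%N).
    by rewrite (eqP E) mul0r.
  by move: hs; rewrite cc_pure ?E.
under eq_bigr do rewrite sigmaE.
rewrite -mulr_suml -natr_sum (@sumTE _ ccn) ?check3 ?divff ?pnatr_eq0 //.
by move=> a b c; rewrite /cc !mk0 !mk1 !mk2.
Qed.

Lemma expE tau : exp_payoff alpha tau (sigma63 R) = \sum_s tau s * V s.
Proof.
rewrite /exp_payoff; apply: eq_bigr => s _; rewrite /V mulr_sumr.
by apply: eq_bigr => t _; rewrite mulrA.
Qed.

Lemma best rho : 0 <= alpha -> is_mixed rho ->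
  exp_payoff alpha rho (sigma63 R) <= exp_payoff alpha (sigma63 R) (sigma63 R).
Proof.
move=> ha [h0 [h1 h2]].
have -> : exp_payoff alpha (sigma63 R) (sigma63 R) = cst.
  rewrite expE.
  transitivity (\sum_s sigma63 R s * cst).
    apply: eq_bigr => s _; case E: (cc s == 0%N).
      by rewrite sigmaE (eqP E) !mul0r.
    by rewrite (proj2 (Vbound s ha (cc_pure _ _))) ?E.
  by rewrite -mulr_suml (proj2 (proj2 sigma_mixed)) mul1r.
rewrite expE.
apply: (@le_trans _ _ (\sum_s rho s * cst)).
  apply: ler_sum => s _; case E: (is_pure s).
    by apply: ler_wpM2l => //; exact: (proj1 (Vbound s ha E)).
  by rewrite h1 ?E // !mul0r.
by rewrite -mulr_suml h2 mul1r.
Qed.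

Lemma unif : uniform_marginals (sigma63 R).
Proof.
move=> k j /=.
rewrite big_mkcond /=.
transitivity (\sum_(s : T) (((s k == j) * cc s)%N)%:R / (20%:R : R)).
  by apply: eq_bigr => s _; case: (s k == j); [rewrite sigmaE mul1n | rewrite mul0n mul0r].
rewrite -mulr_suml -natr_sum.
rewrite (@sumTE _ (fun a b c => (nth 0 [:: a; b; c] k == nat_of_ord j) * ccn a b c)%N); last first.
  move=> a b c; rewrite /cc !mk0 !mk1 !mk2; congr (_ * _)%N.
  by move: k; apply: ord3P; rewrite ?mk0 ?mk1 ?mk2.
have hk : nat_of_ord k \in iota 0 3 by rewrite mem_iota ltn_ord.
have /eqP -> := all7P (allP check4 _ hk) (ltn_ord j).
rewrite (_ : (6 %/ 3 = 2)%N) //.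
case: (j <= 4)%N; last by rewrite mul0r.
by field.
Qed.
End Main.

Theorem mainTheorem10 (R : realType) (alpha : R) :
  0 <= alpha <= 2%:R ->
  is_mixed (sigma63 R) /\ uniform_marginals (sigma63 R) /\
  symmetric_equilibrium alpha (sigma63 R).
Proof.
move=> /andP [ha _].
split; first exact: sigma_mixed.
split; first exact: unif.
split; first exact: sigma_mixed.
split; first exact: sigma_mixed.
by split => rho hr; apply: best.
Qed.
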